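(* Let $B$ be a unital commutative semi-simple Banach algebra with connected maximal ideal space $X$. Let $T$ be a unital endomorphism of $B$ which is a Riesz operator, induced by a selfmap $\phi$ of $X$, and suppose $\{x_0\}=\bigcap_{n=0}^\infty\phi_n(X)$. Then for each $\varepsilon>0$ there exists a positive integer $N$ such that $\phi_N(X)\subset B(x_0,\varepsilon)$.
   Context: The maximal ideal space $X$ of $B$ carries the weak-* (Gelfand) topology, and $\hat f$ denotes the Gelfand transform of $f\in B$. A unital endomorphism $T$ of $B$ is induced by a weak-* continuous selfmap $\phi$ of $X$ if $\widehat{Tf}(x)=\hat f(\phi(x))$ for all $f\in B$, $x\in X$; $\phi_n$ is the $n$-th iterate of $\phi$ ($\phi_0$ the identity). For $x,y\in X$, $\|x-y\|=\sup\{|\hat f(x)-\hat f(y)|: f\in B,\ \|f\|\le 1\}$ (the norm of $x-y$ in the dual $B^*$), and $B(a,\varepsilon)=\{x\in X:\|x-a\|<\varepsilon\}$. A bounded operator $T$ is a Riesz operator if $\lim_{n}\left[\inf\{\|T^n-K\|:K \text{ compact}\}\right]^{1/n}=0$. *)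

(* Defs.v *)
From HB Require Import structures.
From mathcomp Require Import all_boot all_order all_algebra.
From mathcomp Require Import all_classical all_reals all_analysis.
From mathcomp.real_closed Require Import complex.
Import numFieldTopology.Exports numFieldNormedType.Exports.
Import Order.TTheory GRing.Theory Num.Theory.

Set Implicit Arguments.
Unset Strict Implicit.
Unset Printing Implicit Defensive.

Local Open Scope ring_scope.
Local Open Scope classical_set_scope.

(* the complex field, packaged as a numFieldType so that the topological and
   normed instances of MathComp-Analysis for numFieldTypes apply *)
Definition Cx (R : realType) : numFieldType := R[i].

Section BanachAlgebraDefs.
Variable R : realType.
Local Notation C := (Cx R).
Variable B : completeNormedModType C.

(* real-valued norm of an element of B ( `|f| is a nonnegative element of C ) *)
Definition rnorm (f : B) : R := Normc.normc `|f|.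

Definition unital_comm_banach_algebra (mul : B -> B -> B) (one : B) : Prop :=
  [/\ (forall f g h, mul f (mul g h) = mul (mul f g) h),
      (forall f g, mul f g = mul g f),
      (forall f, mul one f = f),
      (forall (a : C) f g h, mul (a *: f + g) h = a *: mul f h + mul g h)
    & [/\ (forall f g, rnorm (mul f g) <= rnorm f * rnorm g),
      rnorm one = 1 & one != 0]].

Definition is_ideal (mul : B -> B -> B) (I : set B) : Prop :=
  [/\ I 0, (forall f g, I f -> I g -> I (f + g)) &
      (forall f g, I g -> I (mul f g))].

Definition maximal_ideal (mul : B -> B -> B) (one : B) (I : set B) : Prop :=
  [/\ is_ideal mul I, ~ I one &
      (forall J, is_ideal mul J -> ~ J one -> I `<=` J -> J = I)].

Definition semisimple (mul : B -> B -> B) (one : B) : Prop :=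
  forall f, (forall I, maximal_ideal mul one I -> I f) -> f = 0.

Definition is_character (mul : B -> B -> B) (chi : B -> C) : Prop :=
  [/\ (forall (a : C) f g, chi (a *: f + g) = a * chi f + chi g),
      (forall f g, chi (mul f g) = chi f * chi g) &
      (exists f, chi f != 0)].

(* the maximal ideal space, as a subset of B -> C with the topology of
   pointwise convergence (= the weak-* topology restricted to characters) *)
Definition max_ideal_space (mul : B -> B -> B) : set {ptws B -> C} :=
  [set chi | is_character mul chi].

Definition dual_dist (x y : B -> C) : R :=
  sup [set Normc.normc (x f - y f) | f in [set f : B | rnorm f <= 1]].

Definition is_linear_op (S : B -> B) : Prop :=
  forall (a : C) f g, S (a *: f + g) = a *: S f + S g.

Definition compact_op (K : B -> B) : Prop :=
  is_linear_op K /\ compact (closure (K @` [set f : B | rnorm f <= 1])).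

Definition op_norm (S : B -> B) : R :=
  sup [set rnorm (S f) | f in [set f : B | rnorm f <= 1]].

Definition ess_norm (S : B -> B) : R :=
  inf [set op_norm (fun f => S f - K f) | K in compact_op].

Definition riesz_op (T : B -> B) : Prop :=
  is_linear_op T /\ continuous T /\
  (fun n : nat => ess_norm (iter n T) `^ (n%:R^-1)) @ \oo --> (0 : R).

End BanachAlgebraDefs.

(* Main.v *)
Require Import Defs.
From HB Require Import structures.
From mathcomp Require Import all_boot all_order all_algebra.
From mathcomp Require Import all_classical all_reals all_analysis.
From mathcomp.real_closed Require Import complex.
From mathcomp Require Import ring lra.
Import numFieldTopology.Exports numFieldNormedType.Exports.
Import Order.TTheory GRing.Theory Num.Theory.
Local Open Scope ring_scope.
Local Open Scope classical_set_scope.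
Set Implicit Arguments.
Unset Strict Implicit.
Unset Printing Implicit Defensive.


Section Norms.
Variable R : realType.
Local Notation C := (Cx R).
Variable B : completeNormedModType C.

Lemma normcE (z : C) : (Normc.normc z)%:C%C = `|z|.
Proof. by []. Qed.

Lemma rnormE (f : B) : (rnorm f)%:C%C = `|f|.
Proof. rewrite /rnorm normcE. exact: normr_id. Qed.

Lemma lecRR (x y : R) : (x%:C%C <= y%:C%C :> C) = (x <= y).
Proof. exact: lecR. Qed.
Lemma ltcRR (x y : R) : (x%:C%C < y%:C%C :> C) = (x < y).
Proof. exact: ltcR. Qed.

Lemma rnorm_ge0 (f : B) : 0 <= rnorm f.
Proof. rewrite -lecRR rnormE; exact: normr_ge0. Qed.

Lemma normc_ge0 (z : C) : 0 <= Normc.normc z.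
Proof. rewrite -lecRR normcE; exact: normr_ge0. Qed.

Lemma rnormD (f g : B) : rnorm (f + g) <= rnorm f + rnorm g.
Proof. by rewrite -lecRR rmorphD /= !rnormE ler_normD. Qed.

Lemma rnormN (f : B) : rnorm (- f) = rnorm f.
Proof. by apply: (@complexI R); rewrite !rnormE normrN. Qed.

Lemma rnormB (f g : B) : rnorm (f - g) = rnorm (g - f).
Proof. by rewrite -rnormN opprB. Qed.

Lemma rnorm0 : rnorm (0 : B) = 0.
Proof. by apply: (@complexI R); rewrite !rnormE normr0. Qed.

Lemma rnormZ (a : C) (f : B) : rnorm (a *: f) = Normc.normc a * rnorm f.
Proof. apply: (@complexI R); rewrite rnormE normrZ -normcE -rnormE. symmetry; exact: rmorphM. Qed.

Lemma normcD (a b : C) : Normc.normc (a + b) <= Normc.normc a + Normc.normc b.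
Proof. by rewrite -lecRR rmorphD /= !normcE ler_normD. Qed.

Lemma normcN' (a : C) : Normc.normc (- a) = Normc.normc a.
Proof. by apply: (@complexI R); rewrite !normcE normrN. Qed.

Lemma normcM' (a b : C) : Normc.normc (a * b) = Normc.normc a * Normc.normc b.
Proof. by apply: (@complexI R); rewrite rmorphM /= !normcE normrM. Qed.

Lemma normcR (r : R) : Normc.normc (r%:C%C : C) = `|r|.
Proof. by rewrite /Normc.normc /= expr0n /= addr0 sqrtr_sqr. Qed.

Lemma rnorm_lt (f : B) (r : R) : (rnorm f < r) = (`|f| < r%:C%C).
Proof. by rewrite -ltcRR rnormE. Qed.
Lemma rnorm_le (f : B) (r : R) : (rnorm f <= r) = (`|f| <= r%:C%C).
Proof. by rewrite -lecRR rnormE. Qed.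

Lemma normc_gt0 (z : C) : 0 < z -> 0 < Normc.normc z.
Proof. by move=> z0; rewrite -ltcRR normcE normr_gt0 gt_eqF. Qed.

Lemma rnorm_lt_normc (f : B) (e : C) : 0 < e -> rnorm f < Normc.normc e -> `|f| < e.
Proof. by move=> e0; rewrite rnorm_lt normcE gtr0_norm. Qed.

Lemma normc_lt (z e : C) : 0 < e -> Normc.normc z < Normc.normc e -> `|z| < e.
Proof. by move=> e0; rewrite -ltcRR !normcE [`|e|]gtr0_norm. Qed.

Lemma normc_lt_of (w rho : C) : `|w| < rho -> Normc.normc w < Normc.normc rho.
Proof.
move=> h; rewrite -ltcRR !normcE.
by rewrite [`|rho|]gtr0_norm // (le_lt_trans (normr_ge0 _) h).
Qed.

Lemma normc_lt_R (z : C) (r : R) : Normc.normc z < r -> `|z| < r%:C%C.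
Proof. by rewrite -ltcRR normcE. Qed.

Lemma cvgB_R (u : nat -> B) (l : B) :
  (forall e : R, 0 < e -> \forall n \near \oo, rnorm (l - u n) < e) ->
  u @ \oo --> l.
Proof.
move=> H; apply/cvgrPdist_lt => e e0.
have := H (Normc.normc e).
have -> : 0 < Normc.normc e.
  by rewrite -ltcRR normcE normr_gt0 gt_eqF.
move=> /(_ isT); apply: filterS => n.
by rewrite rnorm_lt normcE gtr0_norm.
Qed.

Lemma cvgB_R' (u : nat -> B) (l : B) :
  u @ \oo --> l ->
  (forall e : R, 0 < e -> \forall n \near \oo, rnorm (l - u n) < e).
Proof.
move=> /cvgrPdist_lt H e e0.
have := H (e%:C%C); rewrite ltcRR => /(_ e0); apply: filterS => n.
by rewrite rnorm_lt.
Qed.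
End Norms.


Section Alg.
Variable R : realType.
Local Notation C := (Cx R).
Variable B : completeNormedModType C.
Variables (mul : B -> B -> B) (one : B).
Hypothesis hA : unital_comm_banach_algebra mul one.

Lemma mulA f g h : mul f (mul g h) = mul (mul f g) h.
Proof. by case: hA. Qed.
Lemma mulC f g : mul f g = mul g f.
Proof. by case: hA. Qed.
Lemma mul1 f : mul one f = f.
Proof. by case: hA. Qed.
Lemma mulZDl (a : C) f g h : mul (a *: f + g) h = a *: mul f h + mul g h.
Proof. by case: hA. Qed.
Lemma rnormM f g : rnorm (mul f g) <= rnorm f * rnorm g.
Proof. by case: hA => _ _ _ _ []. Qed.
Lemma rnorm1 : rnorm one = 1.
Proof. by case: hA => _ _ _ _ []. Qed.
Lemma one_neq0 : one != 0.
Proof. by case: hA => _ _ _ _ []. Qed.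

Lemma mulDl f g h : mul (f + g) h = mul f h + mul g h.
Proof. by have := mulZDl 1 f g h; rewrite !scale1r. Qed.
Lemma mul0l h : mul 0 h = 0.
Proof. by have := mulDl 0 0 h; rewrite addr0 => /eqP; rewrite -subr_eq subrr eq_sym => /eqP. Qed.
Lemma mulZl (a : C) f h : mul (a *: f) h = a *: mul f h.
Proof. by have := mulZDl a f 0 h; rewrite !addr0 mul0l addr0. Qed.
Lemma mulNl f h : mul (- f) h = - mul f h.
Proof. by rewrite -scaleN1r mulZl scaleN1r. Qed.
Lemma mulBl f g h : mul (f - g) h = mul f h - mul g h.
Proof. by rewrite mulDl mulNl. Qed.
Lemma mulBr f g h : mul h (f - g) = mul h f - mul h g.
Proof. by rewrite !(mulC h) mulBl. Qed.
Lemma mulDr f g h : mul h (f + g) = mul h f + mul h g.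
Proof. by rewrite !(mulC h) mulDl. Qed.

Fixpoint pw (g : B) (n : nat) : B := if n is n'.+1 then mul g (pw g n') else one.
Fixpoint Sp (g : B) (n : nat) : B := if n is n'.+1 then Sp g n' + pw g n' else 0.

Lemma rnorm_pw g n : rnorm (pw g n) <= rnorm g ^+ n.
Proof.
elim: n => [|n IH] /=; first by rewrite rnorm1 expr0.
apply: le_trans (rnormM _ _) _; rewrite exprS ler_wpM2l ?rnorm_ge0 //.
Qed.

Lemma Sp_tel g n : mul (one - g) (Sp g n) = one - pw g n.
Proof.
elim: n => [|n IH] /=; first by rewrite (mulC _ 0) mul0l subrr.
rewrite mulDr IH mulBl mul1.
by rewrite addrA subrK.
Qed.

Lemma Sp_diff g m d :
  rnorm g < 1 ->
  rnorm (Sp g (m + d) - Sp g m) <= rnorm g ^+ m * (1 - rnorm g ^+ d) / (1 - rnorm g).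
Proof.
move=> q1; set q := rnorm g.
have q0 : 0 <= q by exact: rnorm_ge0.
have q1' : 0 < 1 - q by rewrite subr_gt0.
elim: d => [|d IH].
  by rewrite addn0 subrr rnorm0 expr0 subrr mulr0 mul0r.
rewrite addnS /= addrAC.
apply: le_trans (rnormD _ _) _.
have -> : q ^+ m * (1 - q ^+ d.+1) / (1 - q) =
   q ^+ m * (1 - q ^+ d) / (1 - q) + q ^+ (m + d).
  rewrite exprD exprS; field; by rewrite lt0r_neq0.
apply: lerD => //; exact: rnorm_pw.
Qed.

Lemma Sp_cvg g : rnorm g < 1 -> cvgn (Sp g).
Proof.
move=> q1; set q := rnorm g.
have q0 : 0 <= q by exact: rnorm_ge0.
have q1' : 0 < 1 - q by rewrite subr_gt0.
apply/cauchy_cvgP/cauchyP => e e0.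
have en : 0 < Normc.normc e by exact: normc_gt0.
have qm : (GRing.exp q : R ^nat) @ \oo --> 0 by apply: cvg_expr; rewrite ger0_norm.
have /cvgrPdist_lt /(_ (Normc.normc e * (1 - q))) := qm.
rewrite mulr_gt0 // => /(_ isT) [M _ HM].
exists (Sp g M); exists M => // n /= Mn.
rewrite -ball_normE /= -(subnKC Mn) -normrN opprB.
apply: rnorm_lt_normc => //.
apply: (le_lt_trans (Sp_diff _ _ q1)).
have := HM M (leqnn M); rewrite sub0r normrN ger0_norm ?exprn_ge0 // => hM.
rewrite -/q ltr_pdivrMr //; apply: le_lt_trans hM.
rewrite ler_piMr ?exprn_ge0 // gerBl exprn_ge0 //.
Qed.

Lemma neumann g : rnorm g < 1 -> exists u, mul (one - g) u = one.
Proof.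
move=> q1; exists (limn (Sp g)); set L := limn (Sp g).
have SL : Sp g @ \oo --> L by exact: Sp_cvg.
set a := one - g.
have H1 : (fun n => mul a (Sp g n)) @ \oo --> mul a L.
  apply: cvgB_R => e e0.
  have ea : 0 < e / (rnorm a + 1) by rewrite divr_gt0 // ltr_wpDl ?rnorm_ge0.
  have := cvgB_R' SL ea; apply: filterS => n hn.
  rewrite -mulBr; apply: le_lt_trans (rnormM _ _) _.
  have a1 : 0 < rnorm a + 1 by rewrite ltr_wpDl ?rnorm_ge0.
  rewrite ltr_pdivlMr // in hn.
  apply: le_lt_trans hn; rewrite mulrC ler_wpM2l ?rnorm_ge0 // lerDl //.
have H2 : (fun n => mul a (Sp g n)) @ \oo --> one.
  apply: cvgB_R => e e0.
  have qm : (GRing.exp (rnorm g) : R ^nat) @ \oo --> 0.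
    by apply: cvg_expr; rewrite ger0_norm // rnorm_ge0.
  have /cvgrPdist_lt /(_ e e0) := qm; apply: filterS => n.
  rewrite sub0r normrN ger0_norm ?exprn_ge0 ?rnorm_ge0 // => hn.
  rewrite /a Sp_tel opprB addrCA subrr addr0.
  exact: le_lt_trans (rnorm_pw _ _) hn.
exact: (cvg_unique _ H1 H2).
Qed.

End Alg.


Section Chars.
Variable R : realType.
Local Notation C := (Cx R).
Variable B : completeNormedModType C.
Variables (mul : B -> B -> B) (one : B).
Hypothesis hA : unital_comm_banach_algebra mul one.
Variable chi : B -> C.
Hypothesis hchi : is_character mul chi.

Lemma chiZD (a : C) f g : chi (a *: f + g) = a * chi f + chi g.
Proof. by case: hchi. Qed.
Lemma chiM f g : chi (mul f g) = chi f * chi g.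
Proof. by case: hchi. Qed.
Lemma chiD f g : chi (f + g) = chi f + chi g.
Proof. by rewrite -[f in LHS]scale1r chiZD mul1r. Qed.
Lemma chi0 : chi 0 = 0.
Proof. by have := chiD 0 0; rewrite addr0 => /eqP; rewrite -subr_eq subrr eq_sym => /eqP. Qed.
Lemma chiZ (a : C) f : chi (a *: f) = a * chi f.
Proof. by rewrite -[a *: f]addr0 chiZD chi0 addr0. Qed.
Lemma chiN f : chi (- f) = - chi f.
Proof. by rewrite -scaleN1r chiZ mulN1r. Qed.
Lemma chiB f g : chi (f - g) = chi f - chi g.
Proof. by rewrite chiD chiN. Qed.
Lemma chi1 : chi one = 1.
Proof.
case: hchi => _ _ [f f0].
have := chiM one f; rewrite mul1 // => /eqP.
rewrite -{1}[chi f]mul1r eq_sym (inj_eq (mulIf f0)) => /eqP //.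
Qed.

Lemma chi_bound f : Normc.normc (chi f) <= rnorm f.
Proof.
rewrite leNgt; apply/negP => hlt.
set l := chi f in hlt.
have l0 : l != 0.
  apply/eqP => l0; move: hlt; rewrite l0.
  have -> : Normc.normc (0 : C) = 0 by rewrite -[0 : C]/((0:R)%:C%C) normcR normr0.
  by rewrite ltNge rnorm_ge0.
have nl0 : 0 < Normc.normc l by apply: le_lt_trans hlt; exact: rnorm_ge0.
pose h := l^-1 *: f.
have hn : rnorm h < 1.
  rewrite /h rnormZ.
  have -> : Normc.normc l^-1 = (Normc.normc l)^-1.
    apply: (mulIf (lt0r_neq0 nl0)); rewrite -normcM' mulVf // mulVf ?lt0r_neq0 //.
    by rewrite -[1 : C]/((1:R)%:C%C) normcR normr1.
  by rewrite mulrC ltr_pdivrMr // mul1r.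
have [u hu] := neumann hA hn.
have := chiM (one - h) u; rewrite hu chi1 chiB chi1 /h chiZ mulVf // subrr mul0r.
by move=> /eqP; rewrite oner_eq0.
Qed.
End Chars.


Section Disc.
Variable R : realType.
Local Notation C := (Cx R).

Lemma normc_cplx_le (x y : R) : Normc.normc (Complex x y : C) <= `|x| + `|y|.
Proof.
rewrite /Normc.normc /=.
have h : x ^+ 2 + y ^+ 2 <= (`|x| + `|y|) ^+ 2.
  rewrite sqrrD -(real_normK (num_real x)) -(real_normK (num_real y)).
  by rewrite -addrA lerD2l lerDr mulrn_wge0 // mulr_ge0.
have e : `|x| + `|y| = Num.sqrt ((`|x| + `|y|) ^+ 2).
  by rewrite sqrtr_sqr; apply/esym/ger0_norm; apply: addr_ge0.
rewrite [X in _ <= X]e. by rewrite ler_sqrt // sqr_ge0. Qed.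


Lemma Re_le (z : C) : `|complex.Re z| <= Normc.normc z.
Proof.
case: z => x y; rewrite /Normc.normc /=.
rewrite -sqrtr_sqr ler_sqrt; last by apply: addr_ge0; apply: sqr_ge0.
by rewrite lerDl sqr_ge0.
Qed.

Lemma Im_le (z : C) : `|complex.Im z| <= Normc.normc z.
Proof.
case: z => x y; rewrite /Normc.normc /=.
rewrite -sqrtr_sqr ler_sqrt; last by apply: addr_ge0; apply: sqr_ge0.
by rewrite lerDr sqr_ge0.
Qed.

Definition mC (p : R * R) : C := Complex p.1 p.2.

Lemma mC_cont : continuous mC.
Proof.
move=> [a b]; apply/cvgrPdist_lt => e e0.
have d0 : 0 < Normc.normc e / 2 by rewrite divr_gt0 // normc_gt0.
have Ha : \forall q \near (a, b), `|a - q.1| < Normc.normc e / 2.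
  have : (fun q : R * R => q.1) @ nbhs (a, b) --> a by exact: cvg_fst.
  by move=> /cvgrPdist_lt /(_ _ d0).
have Hb : \forall q \near (a, b), `|b - q.2| < Normc.normc e / 2.
  have : (fun q : R * R => q.2) @ nbhs (a, b) --> b by exact: cvg_snd.
  by move=> /cvgrPdist_lt /(_ _ d0).
near=> q.
have -> : mC (a, b) - mC q = Complex (a - q.1) (b - q.2) by [].
apply: normc_lt => //.
apply: le_lt_trans (normc_cplx_le _ _) _.
rewrite [X in _ < X](splitr (Normc.normc e)).
apply: ltrD; [near: q; exact: Ha | near: q; exact: Hb].
Unshelve. all: by end_near.
Qed.

End Disc.


Section Disc2.
Variable R : realType.
Local Notation C := (Cx R).
Lemma compact_disc (rho : C) : compact (closed_ball (0 : C) rho).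
Proof.
set r := Normc.normc rho + 1.
have sq : compact ((`[- r, r] `*` `[- r, r]) : set (R * R)).
  by apply: compact_setX; exact: segment_compact.
have img : compact (@mC R @` (`[- r, r] `*` `[- r, r]) : set C).
  apply: continuous_compact => //. apply: continuous_subspaceT. exact: (@mC_cont R).
apply: subclosed_compact img _ => //; first exact: closed_ball_closed.
move=> z hz.
have [w [bw bzw]] : exists w, ball (0 : C) rho w /\ ball z 1 w.
  have : nbhs z (ball z 1) by apply: nbhsx_ballx.
  move=> /hz [w [h1 h2]]; by exists w.
move: bw bzw; rewrite -!ball_normE /= sub0r normrN => hw hzw.
have hzn : Normc.normc z <= r.
  have -> : z = (z - w) + w by rewrite subrK.
  apply: le_trans (normcD _ _) _; rewrite /r addrC; apply: lerD; apply/ltW.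
    exact: normc_lt_of.
  have := normc_lt_of hzw.
  by rewrite -[1 : C]/((1:R)%:C%C) normcR normr1.
exists (complex.Re z, complex.Im z); last by case: z {hz hzw hzn}.
split; rewrite /= in_itv /= -ler_norml; apply: le_trans hzn.
  exact: Re_le.
exact: Im_le.
Qed.
End Disc2.


Section Cpt.
Variable R : realType.
Local Notation C := (Cx R).
Variable B : completeNormedModType C.
Variables (mul : B -> B -> B) (one : B).
Hypothesis hA : unital_comm_banach_algebra mul one.
Local Notation X := (max_ideal_space mul).
Local Notation PT := {ptws B -> C}.

Lemma closedC0 : closed [set (0 : C)].
Proof. exact/accessible_closed_set1/hausdorff_accessible/norm_hausdorff. Qed.

Lemma closed_zero (E : PT -> C) : continuous E -> closed [set chi | E chi = 0].
Proof.
move=> cE; have -> : [set chi | E chi = 0] = E @^-1` [set 0] by [].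
apply: preimage_closed; last exact: closedC0.
by move=> x _; exact: cE.
Qed.

Lemma ev_cont (f : B) : continuous (fun chi : PT => chi f).
Proof. exact: (@proj_continuous B (fun _ => C) f). Qed.

Definition Pset : set PT :=
  [set chi | forall f, closed_ball (0 : C) ((rnorm f + 1)%:C%C) (chi f)].

Lemma Pset_compact : compact Pset.
Proof.
have := (@tychonoff B (fun _ => C) (fun f => closed_ball (0 : C) ((rnorm f + 1)%:C%C))
   (fun f => @compact_disc R _)).
exact.
Qed.

Definition Yset : set PT :=
  \bigcap_(t in [set: C * B * B])
      [set chi : PT | chi (t.1.1 *: t.1.2 + t.2) - (t.1.1 * chi t.1.2 + chi t.2) = 0]
  `&` \bigcap_(t in [set: B * B]) [set chi : PT | chi (mul t.1 t.2) - chi t.1 * chi t.2 = 0]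
  `&` [set chi : PT | chi one - 1 = 0].

Definition ev (f : B) := fun chi : PT => chi f.

Lemma Yset_closed : closed Yset.
Proof.
apply: closedI; first apply: closedI.
- apply: closed_bigI => t _.
  apply: (@closed_zero (ev (t.1.1 *: t.1.2 + t.2) - ((fun=> t.1.1) \* ev t.1.2 + ev t.2))) => chi.
  apply: continuousB; first exact: ev_cont.
  apply: continuousD; last exact: ev_cont.
  apply: continuousM; [exact: cst_continuous | exact: ev_cont].
- apply: closed_bigI => t _.
  apply: (@closed_zero (ev (mul t.1 t.2) - (ev t.1 \* ev t.2))) => chi.
  apply: continuousB; first exact: ev_cont.
  apply: continuousM; exact: ev_cont.
- apply: (@closed_zero (ev one - (fun=> 1))) => chi.
  apply: continuousB; [exact: ev_cont | exact: cst_continuous].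
Qed.

Lemma X_eq : X = Pset `&` Yset.
Proof.
apply/seteqP; split => chi.
- move=> hchi; split; [|split; [split|]].
  + move=> f; apply: subset_closure; rewrite -ball_normE /= sub0r normrN.
    apply: normc_lt_R; apply: le_lt_trans (chi_bound hA hchi f) _.
    by rewrite ltrDl.
  + by move=> t _ /=; rewrite (chiZD hchi) subrr.
  + by move=> t _ /=; rewrite (chiM hchi) subrr.
  + by rewrite /= (chi1 hA hchi) subrr.
- move=> [_ [[h1 h2] h3]]; split.
  + move=> a f g; apply/eqP; rewrite -subr_eq0; apply/eqP; exact: (h1 (a, f, g)).
  + move=> f g; apply/eqP; rewrite -subr_eq0; apply/eqP; exact: (h2 (f, g)).
  + exists one; move: h3 => /= /eqP; rewrite subr_eq0 => /eqP ->; exact: oner_neq0.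
Qed.

Lemma X_compact : compact X.
Proof. rewrite X_eq; apply: compact_closedI; [exact: Pset_compact | exact: Yset_closed]. Qed.

Lemma PT_hausdorff : hausdorff_space PT.
Proof. apply: hausdorff_product => _; exact: norm_hausdorff. Qed.

End Cpt.


Section Shrink.
Variable R : realType.
Local Notation C := (Cx R).
Variable B : completeNormedModType C.
Variables (mul : B -> B -> B) (one : B).
Hypothesis hA : unital_comm_banach_algebra mul one.
Local Notation X := (max_ideal_space mul).
Local Notation PT := {ptws B -> C}.

Lemma shrink (phi : PT -> PT) (x0 : PT) :
  phi @` X `<=` X -> {within X, continuous phi} ->
  \bigcap_(n in [set: nat]) (iter n phi @` X) = [set x0] ->
  forall U : set PT, nbhs x0 U -> exists M, iter M phi @` X `<=` U.
Proof.
move=> sub cphi inter U nU.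
have subM : forall M x, X x -> X (iter M phi x).
  elim=> [|M IH] x Xx //=; apply: sub; exists (iter M phi x) => //; exact: IH.
have cptM : forall M, compact (iter M phi @` X).
  elim=> [|M IH].
    have -> : iter 0 phi @` X = X.
      by apply/seteqP; split => [z [x Xx <-]|z Xz] //; exists z.
    exact: (X_compact hA).
  have -> : iter M.+1 phi @` X = phi @` (iter M phi @` X).
    by rewrite image_comp.
  apply: continuous_compact IH; apply: continuous_subspaceW cphi.
  by move=> z [x Xx <-]; exact: subM.
have decr : forall M M', (M <= M')%N -> iter M' phi @` X `<=` iter M phi @` X.
  move=> M M' le z [x Xx <-]; exists (iter (M' - M) phi x); first exact: subM.
  by rewrite -iterD subnKC.
apply: contrapT => /forallNP H.
pose G M := iter M phi @` X `\` U.
have G0 : forall M, G M !=set0.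
  move=> M; have /existsNP [z /not_implyP [h1 h2]] := H M.
  by exists z.
have FF : Filter (filter_from [set: nat] G).
  apply: filter_from_filter; first by exists 0%N.
  move=> i j _ _; exists (maxn i j) => //.
  move=> z [hz nU']; split; split => //.
    by apply: decr hz; exact: leq_maxl.
  by apply: decr hz; exact: leq_maxr.
have PF : ProperFilter (filter_from [set: nat] G).
  by apply: filter_from_proper => i _; exact: G0.
have FX : filter_from [set: nat] G X.
  by exists 0%N => // z [[x Xx <-] _].
have [p [Xp clp]] := X_compact hA PF FX.
have pin : forall M, (iter M phi @` X) p.
  move=> M; apply: (compact_closed (@PT_hausdorff R B) (cptM M)).
  move=> W nW; have [|z [[hz _] Wz]] := clp (G M) W _ nW.
    by exists M.
  by exists z.
have px0 : p = x0.
  have : (\bigcap_(n in [set: nat]) (iter n phi @` X)) p by move=> n _; exact: pin.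
  by rewrite inter.
have FG0 : filter_from [set: nat] G (G 0%N) by exists 0%N.
have nUp : nbhs p U by rewrite px0.
have [z [[_ nUz] Uz]] := clp _ _ FG0 nUp.
exact: nUz.
Qed.

End Shrink.


Section Misc.
Variable R : realType.
Local Notation C := (Cx R).
Variable B : completeNormedModType C.
Local Notation PT := {ptws B -> C}.

Lemma lin0 (S : B -> B) : is_linear_op S -> S 0 = 0.
Proof.
move=> lin; have h := lin 1 0 0; rewrite !scale1r !addr0 in h.
by apply: (addrI (S 0)); rewrite addr0 -h.
Qed.

Lemma linZ (S : B -> B) (a : C) f : is_linear_op S -> S (a *: f) = a *: S f.
Proof. by move=> lin; have := lin a f 0; rewrite !addr0 lin0 // addr0. Qed.

Lemma linB (S : B -> B) f g : is_linear_op S -> S (f - g) = S f - S g.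
Proof.
move=> lin; have := lin (-1) g f; rewrite !scaleN1r => h.
by rewrite addrC h addrC.
Qed.

Lemma bounded_lin (S : B -> B) : is_linear_op S -> continuous S ->
  exists M, forall f, rnorm f <= 1 -> rnorm (S f) <= M.
Proof.
move=> lin cont.
have := cont 0; move=> /cvgrPdist_lt /(_ 1 ltr01) /nbhs_normP [r /= r0 hr].
set c := Normc.normc r / 2.
have c0 : 0 < c by rewrite divr_gt0 // normc_gt0.
exists c^-1 => f hf.
have hg : `|0 - c%:C%C *: f| < r.
  rewrite sub0r normrN; apply: rnorm_lt_normc => //.
  rewrite rnormZ normcR ger0_norm ?(ltW c0) //.
  apply: (@le_lt_trans _ _ c); first by rewrite ler_piMr // ltW.
  by rewrite /c ltr_pdivrMr // ltr_pMr ?normc_gt0 // ltr1n.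
have := hr _ hg; rewrite lin0 // sub0r normrN linZ //.
rewrite -[1 : C]/((1:R)%:C%C) -rnorm_lt rnormZ normcR ger0_norm ?(ltW c0) //.
by move=> h; apply/ltW; rewrite -(ltr_pM2l c0) mulfV ?gt_eqF.
Qed.

Lemma seq_bound (s : seq B) : exists2 M, 0 <= M & forall y, y \in s -> rnorm y <= M.
Proof.
elim: s => [|a s [M M0 HM]]; first by exists 0 => // y; rewrite in_nil.
exists (rnorm a + M); first by rewrite addr_ge0 // rnorm_ge0.
move=> y; rewrite in_cons => /predU1P [->|ys]; first by rewrite lerDl.
by apply: le_trans (HM _ ys) _; rewrite lerDr rnorm_ge0.
Qed.

Lemma fin_net (A : set B) (r : R) : compact A -> 0 < r ->
  exists s : seq B, forall a, A a -> exists y, y \in s /\ rnorm (a - y) < r.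
Proof.
move=> cA r0; move: cA; rewrite compact_cover => cA.
have := cA B A (fun y => ball y (r%:C%C)) (fun i _ => ball_open i _).
case.
  move=> a Aa; exists a => //; apply: ballxx; by rewrite ltcRR.
move=> D' _ cov; exists (finmap.enum_fset D') => a /cov [y /= yD' hy]; exists y; split => //.
move: hy; rewrite -ball_normE /= rnormB rnorm_lt //.
Qed.

Lemma fin_near (U : Type) (F : set_system U) (FF : Filter F) (P : B -> U -> Prop)
  (s : seq B) : (forall y, F (P y)) -> F [set z | forall y, y \in s -> P y z].
Proof.
move=> HP; elim: s => [|a s IH].
  by apply: filterS filterT => z _ y; rewrite in_nil.
apply: filterS2 (HP a) IH => z h1 h2 y; rewrite in_cons => /predU1P [->|ys] //.
exact: h2.
Qed.

Lemma nbhs_fin (x0 : PT) (s : seq B) (d : C) : 0 < d ->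
  nbhs x0 [set z : PT | forall y, y \in s -> `|x0 y - z y| < d].
Proof.
move=> d0; apply: (@fin_near _ _ _ (fun y (z : PT) => `|x0 y - z y| < d)) => y.
by have /cvgrPdist_lt := @ev_cont R B y x0; apply.
Qed.

Lemma riesz_small (T : B -> B) (d : R) : riesz_op T -> 0 < d ->
  exists n, ess_norm (iter n T) < d.
Proof.
move=> [_ [_ hc]] d0.
set eta := d / (d + 1).
have d1 : 0 < d + 1 by rewrite addr_gt0.
have eta0 : 0 < eta by rewrite divr_gt0.
have etad : eta <= d.
  by rewrite ler_pdivrMr //; nra.
have eta1 : eta < 1 by rewrite ltr_pdivrMr // mul1r ltrDl.
have := (cvgrPdist_lt _ _).1 hc eta eta0 => -[N _ HN].
exists N.+1; set e := ess_norm (iter N.+1 T).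
have := HN N.+1 (leqnSn N); rewrite sub0r normrN -/e.
set y := e `^ N.+1%:R^-1 => hy.
have y0 : 0 <= y by exact: powR_ge0.
rewrite ger0_norm // in hy.
have [e0|e0] := lerP e 0; first by apply: le_lt_trans e0 d0.
have ey : e = y ^+ N.+1.
  rewrite -powR_mulrn // /y -powRrM mulVf ?pnatr_eq0 // powRr1 //; exact: ltW.
rewrite ey exprS; apply: (@le_lt_trans _ _ y); last by apply: lt_le_trans hy etad.
rewrite ler_piMr // exprn_ile1 //; apply: ltW; exact: lt_trans hy eta1.
Qed.

End Misc.


Lemma compact_op0 (R : realType) (B : completeNormedModType (Cx R)) :
  compact_op (fun _ : B => 0).
Proof.
split; first by move=> a f g; rewrite scaler0 addr0.
have -> : (fun _ : B => (0 : B)) @` [set f : B | rnorm f <= 1] = [set 0].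
  apply/seteqP; split => [_ [f _ <-] //|_ ->]; exists 0 => //.
  by have h := @rnorm0 R B; rewrite /= h ler01.
rewrite -(closure_id _).1; first exact: compact_set1.
exact/accessible_closed_set1/hausdorff_accessible/norm_hausdorff.
Qed.

Unset Implicit Arguments.
Theorem theorem1p2 (R : realType) (B : completeNormedModType (Cx R))
  (mul : B -> B -> B) (one : B)
  (T : B -> B) (phi : {ptws B -> (Cx R)} -> {ptws B -> (Cx R)})
  (x0 : {ptws B -> (Cx R)}) :
  unital_comm_banach_algebra mul one ->
  semisimple mul one ->
  connected (max_ideal_space mul) ->
  (* T is a unital endomorphism of B *)
  is_linear_op T ->
  (forall f g, T (mul f g) = mul (T f) (T g)) ->
  T one = one ->
  (* T is a Riesz operator *)
  riesz_op T ->
  (* T is induced by the weak-* continuous selfmap phi of X *)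
  phi @` max_ideal_space mul `<=` max_ideal_space mul ->
  {within max_ideal_space mul, continuous phi} ->
  (forall f x, max_ideal_space mul x -> x (T f) = phi x f) ->
  \bigcap_(n in [set: nat]) (iter n phi @` max_ideal_space mul) = [set x0] ->
  forall eps : R, 0 < eps ->
  exists N : nat, (0 < N)%N /\
    iter N phi @` max_ideal_space mul `<=`
      [set x | max_ideal_space mul x /\ dual_dist x x0 < eps].
Proof.
move=> hA _ _ hlin _ _ hR hsub hcont hind hinter eps eps0.
have x0X : max_ideal_space mul x0.
  have : (\bigcap_(n in [set: nat]) (iter n phi @` max_ideal_space mul)) x0.
    by rewrite hinter.
  by move=> /(_ 0%N I) [x Xx <-].
have subM : forall M x, max_ideal_space mul x -> max_ideal_space mul (iter M phi x).
  elim=> [|M IH] x Xx //=; apply: hsub; exists (iter M phi x) => //; exact: IH.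
have hfix : phi x0 = x0.
  have : (\bigcap_(n in [set: nat]) (iter n phi @` max_ideal_space mul)) (phi x0).
    move=> n _.
    have : (\bigcap_(n in [set: nat]) (iter n phi @` max_ideal_space mul)) x0.
      by rewrite hinter.
    move=> /(_ n I) [x Xx <-].
    exists (phi x); first by apply: hsub; exists x.
    by rewrite -iterSr iterS.
  by rewrite hinter.
have itfix : forall n, iter n phi x0 = x0 by elim=> //= n ->.
have hindn : forall n f x, max_ideal_space mul x -> x (iter n T f) = iter n phi x f.
  elim=> [|n IH] f x Xx //=.
  rewrite hind // IH; last by apply: hsub; exists x.
  by rewrite -iterSr.
set d := eps / 8.
have d0 : 0 < d by rewrite divr_gt0.
have [n hn] := riesz_small hR d0.
have [K [cK hK]] : exists K, compact_op K /\ op_norm (fun f => iter n T f - K f) < d.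
  have ne : [set op_norm (fun f => iter n T f - K f) | K in @compact_op R B] !=set0.
    by exists (op_norm (fun f => iter n T f - (fun _ => 0) f)); exists (fun _ => 0) => //;
      exact: compact_op0.
  have [y [K' cK' <-] hy] := inf_lt ne hn.
  by exists K'.
have [s hs] := fin_net cK.2 d0.
have hs' : forall f, rnorm f <= 1 -> exists y, y \in s /\ rnorm (K f - y) < d.
  by move=> f hf; apply: hs; apply: subset_closure; exists f.
have linTn : forall m, is_linear_op (iter m T).
  elim=> [|m IH] a f g //=; by rewrite IH hlin.
have contTn : forall m, continuous (iter m T).
  elim=> [|m IH] x /=; first exact: cvg_id.
  by apply: (continuous_comp (IH x)); exact: hR.2.1.
have [MT hMT] := bounded_lin (linTn n) (contTn n).
have [Ms _ hMs] := seq_bound s.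
have hE : forall f, rnorm f <= 1 -> rnorm (iter n T f - K f) < d.
  move=> f hf; apply: le_lt_trans hK; rewrite /op_norm.
  apply: ub_le_sup; last by exists f.
  exists (MT + (d + Ms)) => _ [g hg <-].
  apply: le_trans (rnormD _ _) _; rewrite rnormN; apply: lerD; first exact: hMT.
  have [y [ys hy]] := hs' g hg.
  have -> : K g = (K g - y) + y by rewrite subrK.
  apply: le_trans (rnormD _ _) _; apply: lerD; first exact: ltW.
  exact: hMs.
have dC : 0 < d%:C%C :> Cx R by rewrite ltcRR.
have [M hM] := shrink hA hsub hcont hinter (nbhs_fin x0 s dC).
exists (n + M.+1)%N; split; first by rewrite addnS.
move=> _ [x Xx <-]; split; first exact: subM.
set w := iter M phi (phi x).
have Xw : max_ideal_space mul w by apply: subM; apply: hsub; exists x.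
have Uw : forall y, y \in s -> `|x0 y - w y| < d%:C%C.
  by apply: hM; exists (phi x) => //; apply: hsub; exists x.
have -> : iter (n + M.+1) phi x = iter n phi w by rewrite iterD iterSr.
rewrite /dual_dist.
apply: (@le_lt_trans _ _ (5%:R * d)); last first.
  by rewrite /d; lra.
apply: ge_sup.
  by exists (Normc.normc (iter n phi w 0 - x0 0)); exists 0 => //; have h0 := @rnorm0 R B; rewrite /= h0 ler01.
move=> _ [f hf <-].
have tri : forall a b : Cx R, Normc.normc (a - b) <= Normc.normc a + Normc.normc b.
  by move=> a b; rewrite -[X in _ <= _ + X]normcN'; exact: normcD.
rewrite -(hindn n f w Xw).
have -> : x0 f = x0 (iter n T f) by rewrite hindn // itfix.
set h := iter n T f.
have [y [ys hy]] := hs' f hf.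
set k := K f.
have eq : w h - x0 h = (w (h - k) - x0 (h - k)) + (w (k - y) - x0 (k - y)) + (w y - x0 y).
  rewrite !(chiB Xw) !(chiB x0X); ring.
rewrite eq.
have hhk : rnorm (h - k) < d by exact: hE.
have b1 := chi_bound hA Xw (h - k).
have b2 := chi_bound hA x0X (h - k).
have b3 := chi_bound hA Xw (k - y).
have b4 := chi_bound hA x0X (k - y).
have b5 : Normc.normc (w y - x0 y) < d.
  have := normc_lt_of (Uw y ys).
  by rewrite -normcN' opprB normcR ger0_norm // ltW.
have -> : (5%:R * d) = (d + d) + (d + d) + d by ring.
apply: le_trans (normcD _ _) _; apply: lerD; last exact: ltW.
apply: le_trans (normcD _ _) _; apply: lerD.
  apply: le_trans (tri _ _) _; apply: lerD; apply/ltW; by apply: le_lt_trans hhk.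
apply: le_trans (tri _ _) _; apply: lerD; apply/ltW; by apply: le_lt_trans hy.
Qed.
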